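(* For every set of formulas $\Theta\subseteq\mathrm{Form}$, $\Theta^\vdash=\Theta^\models$.
   Context: Formulas: $\mathrm{Form}$ is the least set containing a fixed countably infinite set of propositional variables and closed under $\alpha\to\beta$, $\neg\alpha$, and $\delta(\langle\alpha_i\rangle)$ for every sequence $\langle\alpha_i\rangle=\alpha_1,\alpha_2,\dots$ indexed by $\omega$. Notation: $\langle\alpha\rangle$ is the constant sequence of value $\alpha$; $\alpha,\langle\beta_i\rangle$ is $\alpha,\beta_1,\beta_2,\dots$; $\langle\alpha_i\rangle_{i>1}$ is $\alpha_2,\alpha_3,\dots$; $\tfrac12\alpha:=\delta(\alpha,\langle\neg(\alpha\to\alpha)\rangle)$; a schema $\alpha\leftrightarrow\beta$ stands for the two schemas $\alpha\to\beta$ and $\beta\to\alpha$. The calculus $\mathcal{L}_\Delta$ has axiom schemata: (Ł1) $\alpha\to(\beta\to\alpha)$; (Ł2) $(\alpha\to\beta)\to((\beta\to\gamma)\to(\alpha\to\gamma))$; (Ł3) $((\alpha\to\beta)\to\beta)\to((\beta\to\alpha)\to\alpha)$; (Ł4) $(\neg\alpha\to\neg\beta)\to(\beta\to\alpha)$; (Δ1) $\neg(\delta(\langle\alpha_i\rangle)\to\tfrac12\alpha_1)\leftrightarrow\tfrac12\delta(\langle\alpha_i\rangle_{i>1})$; (Δ2) $\tfrac12\delta(\langle\alpha_i\rangle)\leftrightarrow\delta(\langle\tfrac12\alpha_i\rangle)$; (Δ3) $\delta(\langle\alpha\rangle)\leftrightarrow\alpha$; (Δ4) $\tfrac12\delta(\langle\alpha_i\rangle)\leftrightarrow\delta(\neg(\alpha\to\alpha),\langle\alpha_i\rangle)$;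 (Δ5) $\delta(\langle\alpha_i\rangle)\to\delta(\langle\neg\alpha_i\to\beta_i\rangle)$; (Δ6) $\tfrac12\neg(\alpha\to\beta)\leftrightarrow\neg(\tfrac12\alpha\to\tfrac12\beta)$; (Δ7) $\delta(\langle\alpha_i\to\beta_i\rangle)\to(\delta(\langle\alpha_i\rangle)\to\delta(\langle\beta_i\rangle))$. Rules: Modus Ponens and the $\delta$-rule (from $\alpha_i$ for all $i\in\omega$ infer $\delta(\langle\alpha_i\rangle)$). A proof of $\alpha$ from $\Theta$ is a sequence $(\alpha_i)_{i\in\eta+1}$ indexed by a successor ordinal with $\eta$ countable, $\alpha_\eta=\alpha$, each member an axiom, an element of $\Theta$, or obtained from earlier members by a rule. $\Theta^\vdash$ is the set of formulas provable from $\Theta$. Semantics: a valuation is a map $f\colon\mathrm{Form}\to[0,1]$ with $f(\neg\alpha)=1-f(\alpha)$, $f(\alpha\to\beta)=\min\{1,1-f(\alpha)+f(\beta)\}$, $f(\delta(\langle\alpha_i\rangle))=\sum_{i\ge1}f(\alpha_i)/2^i$. $f$ satisfies $\alpha$ if $f(\alpha)=1$. $\Theta^\models$ is the set of formulas satisfied by every valuation that satisfies every formula in $\Theta$. *)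

(* Defs.v *)
From Stdlib Require Import Reals.
Open Scope R_scope.

(** Formulas. Propositional variables are indexed by nat. A sequence
    <alpha_i> = alpha_1, alpha_2, ... is represented by s : nat -> Form
    with s 0 = alpha_1, s 1 = alpha_2, ... *)
Inductive Form : Type :=
| Var : nat -> Form
| Imp : Form -> Form -> Form
| Neg : Form -> Form
| Delta : (nat -> Form) -> Form.

Definition scons (a : Form) (s : nat -> Form) : nat -> Form :=
  fun n => match n with O => a | S m => s m end.

Definition stail (s : nat -> Form) : nat -> Form := fun n => s (S n).

Definition sconst (a : Form) : nat -> Form := fun _ => a.

Definition half (a : Form) : Form := Delta (scons a (sconst (Neg (Imp a a)))).

(** IsAxiom schemata of L_Delta (each biconditional schema gives two). *)
Inductive IsAxiom : Form -> Prop :=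
| L1 : forall a b, IsAxiom (Imp a (Imp b a))
| L2 : forall a b c, IsAxiom (Imp (Imp a b) (Imp (Imp b c) (Imp a c)))
| L3 : forall a b, IsAxiom (Imp (Imp (Imp a b) b) (Imp (Imp b a) a))
| L4 : forall a b, IsAxiom (Imp (Imp (Neg a) (Neg b)) (Imp b a))
| D1a : forall s, IsAxiom (Imp (Neg (Imp (Delta s) (half (s O)))) (half (Delta (stail s))))
| D1b : forall s, IsAxiom (Imp (half (Delta (stail s))) (Neg (Imp (Delta s) (half (s O)))))
| D2a : forall s, IsAxiom (Imp (half (Delta s)) (Delta (fun n => half (s n))))
| D2b : forall s, IsAxiom (Imp (Delta (fun n => half (s n))) (half (Delta s)))
| D3a : forall a, IsAxiom (Imp (Delta (sconst a)) a)
| D3b : forall a, IsAxiom (Imp a (Delta (sconst a)))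
| D4a : forall a s, IsAxiom (Imp (half (Delta s)) (Delta (scons (Neg (Imp a a)) s)))
| D4b : forall a s, IsAxiom (Imp (Delta (scons (Neg (Imp a a)) s)) (half (Delta s)))
| D5 : forall s t, IsAxiom (Imp (Delta s) (Delta (fun n => Imp (Neg (s n)) (t n))))
| D6a : forall a b, IsAxiom (Imp (half (Neg (Imp a b))) (Neg (Imp (half a) (half b))))
| D6b : forall a b, IsAxiom (Imp (Neg (Imp (half a) (half b))) (half (Neg (Imp a b))))
| D7 : forall s t, IsAxiom (Imp (Delta (fun n => Imp (s n) (t n)))
                            (Imp (Delta s) (Delta t))).

(** A proof of [phi] from [Theta]: a sequence indexed by a countable
    successor ordinal eta+1, represented as a countable type [I] carrying a
    strict well-order [lt] (well-founded, transitive, total) with a greatest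
    element [top] (the last index eta), a labelling [a : I -> Form] with
    [a top = phi], and each member an axiom, a member of Theta, or obtained
    from earlier members by Modus Ponens or by the delta-rule. *)
Definition is_proof (Theta : Form -> Prop) (phi : Form)
  (I : Type) (lt : I -> I -> Prop) (top : I) (a : I -> Form) : Prop :=
  well_founded lt /\
  (forall i j k, lt i j -> lt j k -> lt i k) /\
  (forall i j, lt i j \/ i = j \/ lt j i) /\
  (exists enc : I -> nat, forall i j, enc i = enc j -> i = j) /\
  (forall i, i = top \/ lt i top) /\
  a top = phi /\
  (forall i,
     IsAxiom (a i) \/
     Theta (a i) \/
     (exists j k, lt j i /\ lt k i /\ a k = Imp (a j) (a i)) \/
     (exists g : nat -> I, (forall n, lt (g n) i) /\
                           a i = Delta (fun n => a (g n)))).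

Definition Provable (Theta : Form -> Prop) (phi : Form) : Prop :=
  exists (I : Type) (lt : I -> I -> Prop) (top : I) (a : I -> Form),
    is_proof Theta phi I lt top a.

(** Valuations: f(delta(<alpha_i>)) = sum_{i>=1} f(alpha_i)/2^i,
    i.e. sum_{n>=0} f(s n)/2^(n+1). *)
Definition valuation (f : Form -> R) : Prop :=
  (forall a, 0 <= f a <= 1) /\
  (forall a, f (Neg a) = 1 - f a) /\
  (forall a b, f (Imp a b) = Rmin 1 (1 - f a + f b)) /\
  (forall s, infinite_sum (fun n => f (s n) / 2 ^ (S n)) (f (Delta s))).

Definition Entails (Theta : Form -> Prop) (phi : Form) : Prop :=
  forall f, valuation f -> (forall t, Theta t -> f t = 1) -> f phi = 1.

(* Main.v *)
From Stdlib Require Import Setoid Morphisms Lia PeanoNat Arith Reals Lra ZArith Classical Eqdep_dec IndefiniteDescription Cantor FunctionalExtensionality.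
From mathcomp Require classical_sets.
Unset Asymmetric Patterns.
Require Import Defs.
Open Scope nat_scope.

Definition Top : Form := Imp (Var 0) (Var 0).
Definition Bot : Form := Neg Top.

Class Filt (F : Form -> Prop) : Prop := {
  fax : forall x, IsAxiom x -> F x;
  fmp : forall x y, F x -> F (Imp x y) -> F y }.

Section Hilb.
Context {F : Form -> Prop} {HF : Filt F}.
Lemma hL1 : forall p q, F (Imp p (Imp q p)). Proof. intros; apply fax; constructor. Qed.
Lemma hL2 : forall p q r, F (Imp (Imp p q) (Imp (Imp q r) (Imp p r))). Proof. intros; apply fax; constructor. Qed.
Lemma hL3 : forall p q, F (Imp (Imp (Imp p q) q) (Imp (Imp q p) p)). Proof. intros; apply fax; constructor. Qed.
Lemma hL4 : forall p q, F (Imp (Imp (Neg p) (Neg q)) (Imp q p)). Proof. intros; apply fax; constructor. Qed.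
Lemma g0 : forall x0 x1 x2 : Form, F (Imp (Imp (Imp x0 x1) x2) (Imp x1 x2)).
Proof. intros x0 x1 x2. exact (fmp _ _ (hL1 x1 x0) (hL2 x1 (Imp x0 x1) x2)). Qed.

Lemma g1 : forall x0 x1 x2 : Form, F (Imp x0 (Imp x1 (Imp x2 x1))).
Proof. intros x0 x1 x2. exact (fmp _ _ (hL1 x1 x2) (hL1 (Imp x1 (Imp x2 x1)) x0)). Qed.

Lemma g2 : forall x0 x1 x2 : Form, F (Imp (Imp (Imp x0 (Imp x1 x0)) x2) x2).
Proof. intros x0 x1 x2. exact (fmp _ _ (g1 (Imp x2 (Imp x0 (Imp x1 x0))) x0 x1) (hL3 x2 (Imp x0 (Imp x1 x0)))). Qed.

Lemma g3 : forall x0 : Form, F (Imp x0 x0).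
Proof. intros x0. exact (fmp _ _ (g2 Top Top x0) (g0 (Imp Top (Imp Top Top)) x0 x0)). Qed.

Lemma g4 : forall x0 x1 x2 x3 : Form, F (Imp (Imp (Imp (Imp x0 x1) (Imp x2 x1)) x3) (Imp (Imp x2 x0) x3)).
Proof. intros x0 x1 x2 x3. exact (fmp _ _ (hL2 x2 x0 x1) (hL2 (Imp x2 x0) (Imp (Imp x0 x1) (Imp x2 x1)) x3)). Qed.

Lemma g5 : forall x0 x1 : Form, F (Imp x0 (Imp (Imp x0 x1) x1)).
Proof. intros x0 x1. exact (fmp _ _ (hL3 x1 x0) (g0 (Imp x1 x0) x0 (Imp (Imp x0 x1) x1))). Qed.

Lemma g6 : forall x0 x1 x2 : Form, F (Imp (Imp (Imp (Imp x0 x1) x1) x2) (Imp x0 x2)).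
Proof. intros x0 x1 x2. exact (fmp _ _ (g5 x0 x1) (hL2 x0 (Imp (Imp x0 x1) x1) x2)). Qed.

Lemma g7 : forall x0 x1 x2 : Form, F (Imp (Imp x0 (Imp x1 x2)) (Imp x1 (Imp x0 x2))).
Proof. intros x0 x1 x2. exact (fmp _ _ (g6 x1 x2 (Imp x0 x2)) (g4 (Imp x1 x2) x2 x0 (Imp x1 (Imp x0 x2)))). Qed.

Lemma hI : forall p, F (Imp p p). Proof. exact g3. Qed.
Lemma hC : forall p q r, F (Imp (Imp p (Imp q r)) (Imp q (Imp p r))). Proof. exact g7. Qed.
End Hilb.

Definition le (F : Form -> Prop) x y := F (Imp x y).
Definition eqv (F : Form -> Prop) x y := le F x y /\ le F y x.

Section Alg.
Context {F : Form -> Prop} {HF : Filt F}.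
Local Notation mp := (@fmp F HF).

Lemma mp2 x y : F x -> le F x y -> F y. Proof. intros H1 H2; exact (fmp _ _ H1 H2). Qed.
Lemma le_refl x : le F x x. Proof. apply hI. Qed.
Lemma le_trans x y z : le F x y -> le F y z -> le F x z.
Proof. unfold le; intros H1 H2. exact (fmp _ _ H2 (fmp _ _ H1 (hL2 x y z))). Qed.
Lemma thm_le x y : F (Imp x y) -> le F x y. Proof. auto. Qed.
Lemma hB p q r : F (Imp (Imp q r) (Imp (Imp p q) (Imp p r))).
Proof. eapply fmp. apply hL2. apply hC. Qed.
Lemma imp_mono_r x y z : le F y z -> le F (Imp x y) (Imp x z).
Proof. unfold le; intros H. exact (fmp _ _ H (hB x y z)). Qed.
Lemma imp_anti_l x y z : le F x y -> le F (Imp y z) (Imp x z).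
Proof. unfold le; intros H. exact (fmp _ _ H (hL2 x y z)). Qed.
Lemma le_imp x y z w : le F y x -> le F z w -> le F (Imp x z) (Imp y w).
Proof. intros. eapply le_trans. apply imp_anti_l; eauto. apply imp_mono_r; auto. Qed.
Lemma F_le x : F x -> forall y, le F y x. Proof. intros H y. exact (fmp _ _ H (hL1 x y)). Qed.
Lemma exch x y z : le F (Imp x (Imp y z)) (Imp y (Imp x z)). Proof. apply hC. Qed.
Lemma pt x y : le F x (Imp (Imp x y) y).
Proof. exact (fmp _ _ (hI (Imp x y)) (hC _ _ _)). Qed.
Lemma top_imp x y : F x -> eqv F (Imp x y) y.
Proof. intros H; split. exact (mp _ _ H (pt x y)). apply hL1. Qed.
Lemma FTop : F Top. Proof. apply hI. Qed.
Lemma le_F x y : le F x y -> F x -> F y. Proof. intros H1 H2; exact (fmp _ _ H2 H1). Qed.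
End Alg.

Section Neg.
Context {F : Form -> Prop} {HF : Filt F}.
Lemma hL4' : forall p q, F (Imp (Imp (Neg p) (Neg q)) (Imp q p)). Proof. apply hL4. Qed.
Lemma n0 : forall x0 x1 x2 : Form, F (Imp (Imp (Imp x0 x1) x2) (Imp x1 x2)).
Proof. intros x0 x1 x2. exact (fmp _ _ (hL1 x1 x0) (hL2 x1 (Imp x0 x1) x2)). Qed.

Lemma n1 : forall x0 x1 : Form, F (Imp (Neg x0) (Imp x0 x1)).
Proof. intros x0 x1. exact (fmp _ _ (hL4' x1 x0) (n0 (Neg x1) (Neg x0) (Imp x0 x1))). Qed.

Lemma n2 : forall x0 x1 x2 : Form, F (Imp (Imp (Imp x0 x1) x2) (Imp (Neg x0) x2)).
Proof. intros x0 x1 x2. exact (fmp _ _ (n1 x0 x1) (hL2 (Neg x0) (Imp x0 x1) x2)). Qed.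

Lemma n3 : forall x0 x1 : Form, F (Imp (Neg (Neg x0)) (Imp x1 x0)).
Proof. intros x0 x1. exact (fmp _ _ (hL4' x0 x1) (n2 (Neg x0) (Neg x1) (Imp x1 x0))). Qed.

Lemma n4 : forall x0 x1 : Form, F (Imp x0 (Imp (Neg (Neg x1)) x1)).
Proof. intros x0 x1. exact (fmp _ _ (n3 x1 x0) (hC (Neg (Neg x1)) x0 x1)). Qed.

Lemma n5 : forall x0 : Form, F (Imp (Neg (Neg x0)) x0).
Proof. intros x0. exact (fmp _ _ (hI Top) (n4 (Imp Top Top) x0)). Qed.

Lemma n6 : forall x0 : Form, F (Imp x0 (Neg (Neg x0))).
Proof. intros x0. exact (fmp _ _ (n5 (Neg x0)) (hL4' (Neg (Neg x0)) x0)). Qed.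

Lemma n7 : forall x0 x1 : Form, F (Imp x0 (Imp x1 x1)).
Proof. intros x0 x1. exact (fmp _ _ (hI x1) (hL1 (Imp x1 x1) x0)). Qed.

Lemma n8 : forall x0 x1 : Form, F (Imp (Imp (Imp x0 x0) x1) x1).
Proof. intros x0 x1. exact (fmp _ _ (n7 (Imp x1 (Imp x0 x0)) x0) (hL3 x1 (Imp x0 x0))). Qed.

Lemma n9 : forall x0 x1 : Form, F (Imp (Neg (Imp x0 x0)) x1).
Proof. intros x0 x1. exact (fmp _ _ (n8 x0 x1) (n2 (Imp x0 x0) x1 x1)). Qed.

Lemma hDN1 p : F (Imp (Neg (Neg p)) p). Proof. apply n5. Qed.
Lemma hDN2 p : F (Imp p (Neg (Neg p))). Proof. apply n6. Qed.
Lemma hEFQ p q : F (Imp (Neg (Imp p p)) q). Proof. apply n9. Qed.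
End Neg.

Section Alg2.
Context {F : Form -> Prop} {HF : Filt F}.
Local Notation mp := (@fmp F HF).
Local Notation "x <= y" := (le F x y).
Local Notation "x == y" := (eqv F x y) (at level 70).

Lemma eqv_refl x : x == x. Proof. split; apply le_refl. Qed.
Lemma eqv_sym x y : x == y -> y == x. Proof. intros [? ?]; split; auto. Qed.
Lemma eqv_trans x y z : x == y -> y == z -> x == z.
Proof. intros [? ?] [? ?]; split; eapply le_trans; eauto. Qed.

Lemma dn1 x : Neg (Neg x) <= x. Proof. apply hDN1. Qed.
Lemma dn2 x : x <= Neg (Neg x). Proof. apply hDN2. Qed.
Lemma dn x : Neg (Neg x) == x. Proof. split; [apply dn1|apply dn2]. Qed.
Lemma l4 x y : Neg x <= Neg y -> y <= x. Proof. intros H; exact (mp _ _ H (hL4 x y)). Qed.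
Lemma neg_anti x y : x <= y -> Neg y <= Neg x.
Proof. intros H. apply l4. eapply le_trans. apply dn1. eapply le_trans. exact H. apply dn2. Qed.
Lemma hCP x y : Imp x y <= Imp (Neg y) (Neg x).
Proof.
  (* (x->y) <= (NNx -> NNy) <= (Ny -> Nx) *)
  eapply le_trans. apply le_imp. apply dn1. apply dn2. apply (hL4 (Neg x) (Neg y)).
Qed.
Lemma cp x y : Imp x y == Imp (Neg y) (Neg x).
Proof. split. apply hCP. apply (hL4 y x). Qed.
Lemma le_top x : x <= Top. Proof. apply F_le, FTop. Qed.
Lemma bot_le y : Bot <= y. Proof. apply hEFQ. Qed.
End Alg2.

#[global] Instance eqv_Equiv (F : Form -> Prop) (HF : Filt F) : Equivalence (eqv F).
Proof. split; [intro; apply eqv_refl|intros ? ?; apply eqv_sym|intros ? ? ?; apply eqv_trans]. Qed.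
#[global] Instance le_Pre (F : Form -> Prop) (HF : Filt F) : PreOrder (le F).
Proof. split; [intro; apply le_refl|intros ? ? ?; apply le_trans]. Qed.

Add Parametric Morphism (F : Form -> Prop) (HF : Filt F) : Imp
  with signature (eqv F) ==> (eqv F) ==> (eqv F) as imp_mor.
Proof. intros x y [] z w []; split; apply le_imp; auto. Qed.

Add Parametric Morphism (F : Form -> Prop) (HF : Filt F) : Imp
  with signature (le F) --> (le F) ++> (le F) as imp_mor_le.
Proof. intros x y ? z w ?; apply le_imp; auto. Qed.

Add Parametric Morphism (F : Form -> Prop) (HF : Filt F) : Neg
  with signature (eqv F) ==> (eqv F) as neg_mor.
Proof. intros x y []; split; apply neg_anti; auto. Qed.

Add Parametric Morphism (F : Form -> Prop) (HF : Filt F) : Neg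
  with signature (le F) --> (le F) as neg_mor_le.
Proof. intros x y ?; apply neg_anti; auto. Qed.

Add Parametric Morphism (F : Form -> Prop) (HF : Filt F) : (le F)
  with signature (eqv F) ==> (eqv F) ==> iff as le_mor.
Proof. intros x y [] z w []; split; intros; repeat (eapply le_trans; eauto). Qed.

Add Parametric Morphism (F : Form -> Prop) (HF : Filt F) : F
  with signature (eqv F) ==> iff as F_mor.
Proof. intros x y []; split; intros; eapply le_F; eauto. Qed.

Add Parametric Morphism (F : Form -> Prop) (HF : Filt F) : F
  with signature (le F) ==> Basics.impl as F_mor_le.
Proof. intros x y ? ?; eapply le_F; eauto. Qed.

Definition oplus a b := Imp (Neg a) b.
Definition otimes a b := Neg (Imp a (Neg b)).
Definition vee a b := Imp (Imp a b) b.

Section MV.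
Context {F : Form -> Prop} {HF : Filt F}.
Local Notation mp := (@fmp F HF).
Local Notation "x <= y" := (le F x y).
Local Notation "x == y" := (eqv F x y) (at level 70).

Lemma eqv_le x y : x == y -> x <= y. Proof. intros []; auto. Qed.
Lemma eqv_ge x y : x == y -> y <= x. Proof. intros []; auto. Qed.
Lemma le_antisym x y : x <= y -> y <= x -> x == y. Proof. split; auto. Qed.

Lemma l3 a b : vee a b == vee b a. Proof. split; apply hL3. Qed.
Lemma exch_eqv x y z : Imp x (Imp y z) == Imp y (Imp x z). Proof. split; apply hC. Qed.
Lemma F_top x : F x -> x == Top. Proof. intros; split. apply le_top. apply F_le; auto. Qed.
Lemma top_F x : x == Top -> F x. Proof. intros H. rewrite H. apply FTop. Qed.
Lemma Fimp_top x y : F x -> Imp x y == y. Proof. apply top_imp. Qed.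
Lemma imp_top_F x y : F (Imp x y) <-> x <= y. Proof. reflexivity. Qed.
Lemma imp_neg_swap a b : Imp a (Neg b) == Imp b (Neg a).
Proof. rewrite cp. rewrite dn. reflexivity. Qed.
Lemma imp_otimes p q r : Imp (otimes p q) r == Imp p (Imp q r).
Proof.
  unfold otimes. rewrite (cp q r). rewrite (exch_eqv p (Neg r) (Neg q)).
  rewrite (cp (Neg r) (Imp p (Neg q))). rewrite dn. reflexivity.
Qed.
Lemma meet_le a y : y <= a -> otimes a (Imp a y) == y.
Proof.
  intros H. unfold otimes. rewrite imp_neg_swap. rewrite (cp a y).
  change (Neg (vee (Neg y) (Neg a)) == y). rewrite l3.
  unfold vee. rewrite (Fimp_top (Imp (Neg a) (Neg y))). apply dn.
  apply neg_anti; auto.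
Qed.
Lemma pt_le x y : x <= Imp (Imp x y) y. Proof. apply pt. Qed.
Lemma bck c x : Imp (Imp (Imp c x) x) x == Imp c x.
Proof.
  split. apply le_imp. apply pt. apply le_refl. apply pt.
Qed.
Lemma Gid x y : Imp (Imp x y) (Imp y x) == Imp y x.
Proof.
  set (A := Imp x y).
  assert (E1 : Imp y x == Imp (Imp A y) x).
  { unfold A. change (Imp (Imp x y) y) with (vee x y). rewrite l3. unfold vee. rewrite bck. reflexivity. }
  rewrite E1 at 1. rewrite (exch_eqv A (Imp A y) x). rewrite (exch_eqv (Imp A y) A x).
  rewrite <- imp_otimes. rewrite meet_le. reflexivity.
  unfold A. apply hL1.
Qed.
Lemma PL x y : F (vee (Imp x y) (Imp y x)).
Proof. unfold vee. rewrite Gid. apply hI. Qed.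
Lemma lub a b r : a <= r -> b <= r -> vee a b <= r.
Proof.
  intros Ha Hb. rewrite l3. unfold vee.
  transitivity (Imp (Imp r a) a). apply le_imp. apply le_imp; auto. reflexivity. reflexivity.
  change (vee r a <= r). rewrite l3. unfold vee. rewrite Fimp_top; auto. reflexivity.
Qed.
Lemma S11 x y r : F (Imp (Imp x y) r) -> F (Imp (Imp y x) r) -> F r.
Proof.
  intros H1 H2. apply (le_F _ _ (lub _ _ _ H1 H2)). apply PL.
Qed.
End MV.

Add Parametric Morphism (F : Form -> Prop) (HF : Filt F) : oplus
  with signature (eqv F) ==> (eqv F) ==> (eqv F) as oplus_mor.
Proof. intros. unfold oplus. rewrite H, H0. reflexivity. Qed.
Add Parametric Morphism (F : Form -> Prop) (HF : Filt F) : oplus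
  with signature (le F) ++> (le F) ++> (le F) as oplus_mor_le.
Proof. intros. unfold oplus. apply le_imp; auto. apply neg_anti; auto. Qed.
Add Parametric Morphism (F : Form -> Prop) (HF : Filt F) : otimes
  with signature (eqv F) ==> (eqv F) ==> (eqv F) as otimes_mor.
Proof. intros. unfold otimes. rewrite H, H0. reflexivity. Qed.
Add Parametric Morphism (F : Form -> Prop) (HF : Filt F) : vee
  with signature (eqv F) ==> (eqv F) ==> (eqv F) as vee_mor.
Proof. intros. unfold vee. rewrite H, H0. reflexivity. Qed.

Section MV2.
Context {F : Form -> Prop} {HF : Filt F}.
Local Notation "x <= y" := (le F x y).
Local Notation "x == y" := (eqv F x y) (at level 70).

Lemma oplus_comm a b : oplus a b == oplus b a.
Proof. unfold oplus. rewrite cp. rewrite dn. reflexivity. Qed.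
Lemma oplus_assoc a b c : oplus (oplus a b) c == oplus a (oplus b c).
Proof.
  unfold oplus. transitivity (Imp (otimes (Neg a) (Neg b)) c).
  unfold otimes. rewrite (dn b). reflexivity. apply imp_otimes.
Qed.
Lemma negbot : Neg Bot == Top. Proof. apply dn. Qed.
Lemma oplus_bot x : oplus Bot x == x.
Proof. unfold oplus. rewrite negbot. apply Fimp_top, FTop. Qed.
Lemma oplus_bot_r x : oplus x Bot == x.
Proof. rewrite oplus_comm. apply oplus_bot. Qed.
Lemma oplus_top x : oplus x Top == Top.
Proof. apply F_top. exact (fmp _ _ FTop (hL1 Top (Neg x))). Qed.
Lemma oplus_top_l x : oplus Top x == Top.
Proof. rewrite oplus_comm; apply oplus_top. Qed.
Lemma le_oplus_l a b : a <= oplus a b.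
Proof. unfold oplus. rewrite cp. rewrite (dn a). apply hL1. Qed.
Lemma le_oplus_r a b : b <= oplus a b.
Proof. apply hL1. Qed.
Lemma neg_le_swap a b : a <= Neg b -> b <= Neg a.
Proof. intros H. apply neg_anti in H. rewrite dn in H. auto. Qed.
Lemma le_neg_iff a b : a <= b <-> Neg b <= Neg a.
Proof. split. apply neg_anti. intros H; apply neg_anti in H; rewrite !dn in H; auto. Qed.
Lemma bot_eqv x : x <= Bot -> x == Bot.
Proof. intros; split; auto. apply bot_le. Qed.

Lemma canc_imp x y : x <= Neg y -> Imp (oplus x y) y == Neg x.
Proof.
  intros H. change (vee (Neg x) y == Neg x). rewrite l3. unfold vee.
  apply Fimp_top. apply neg_le_swap; auto.
Qed.
Lemma canc c p q : oplus c p == oplus c q -> p <= Neg c -> q <= Neg c -> p == q.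
Proof.
  intros E Hp Hq. rewrite <- (dn p), <- (dn q).
  rewrite <- (canc_imp p c Hp), <- (canc_imp q c Hq).
  rewrite (oplus_comm p c), (oplus_comm q c), E. reflexivity.
Qed.
Lemma canc0 x y : oplus x y == y -> x <= Neg y -> x == Bot.
Proof.
  intros E H. rewrite <- (dn x). rewrite <- (canc_imp x y H). rewrite E.
  unfold Bot. rewrite (F_top (Imp y y)). reflexivity. apply hI.
Qed.
Lemma neg_top : Neg Top == Bot. Proof. reflexivity. Qed.
Lemma neg_imp_self a : Neg (Imp a a) == Bot.
Proof. unfold Bot. rewrite (F_top (Imp a a)) by apply hI. reflexivity. Qed.
End MV2.

Class DFilt (T : Form -> Prop) : Prop := {
  dfilt :: Filt T;
  drule : forall s, (forall n, T (s n)) -> T (Delta s) }.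

Definition h := half.

Section Delta.
Context {T : Form -> Prop} {HT : DFilt T}.
Local Notation "x <= y" := (le T x y).
Local Notation "x == y" := (eqv T x y) (at level 70).

Lemma ax_le x y : IsAxiom (Imp x y) -> x <= y. Proof. intros H; exact (@fax T _ _ H). Qed.

Lemma dmono s t : (forall n, s n <= t n) -> Delta s <= Delta t.
Proof.
  intros H. pose proof (drule (fun n => Imp (s n) (t n)) H) as D.
  exact (fmp _ _ D (fax _ (D7 s t))).
Qed.
Lemma dcong s t : (forall n, s n == t n) -> Delta s == Delta t.
Proof. intros H; split; apply dmono; intro n; apply H. Qed.
Lemma d3 a : Delta (sconst a) == a. Proof. split; apply ax_le; constructor. Qed.
Lemma half_le x : half x <= x.
Proof.
  unfold half. transitivity (Delta (sconst x)). apply dmono. intros [|n]; simpl. reflexivity. apply hEFQ.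
  apply eqv_le, d3.
Qed.
Lemma half_bot a : half (Neg (Imp a a)) == Bot.
Proof. apply bot_eqv. rewrite half_le. rewrite neg_imp_self. reflexivity. Qed.
Lemma d6 a b : half (Neg (Imp a b)) == Neg (Imp (half a) (half b)).
Proof. split; apply ax_le; constructor. Qed.
Lemma h3 a b : Imp (half a) (half b) == Neg (half (Neg (Imp a b))).
Proof. rewrite d6. rewrite dn. reflexivity. Qed.
Lemma half_mono_thm a b : Imp a b <= Imp (half a) (half b).
Proof.
  rewrite h3. rewrite <- (dn (Imp a b)) at 1. apply neg_anti. apply half_le.
Qed.
End Delta.

Section Lift.
Context {T : Form -> Prop} {HT : DFilt T} {F : Form -> Prop} {HF : Filt F}
  (TF : forall x, T x -> F x).
Lemma lift_le x y : le T x y -> le F x y. Proof. apply TF. Qed.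
Lemma lift_eqv x y : eqv T x y -> eqv F x y. Proof. intros []; split; apply TF; auto. Qed.
Lemma half_mono x y : le F x y -> le F (half x) (half y).
Proof. intros H. exact (@fmp F HF (Imp x y) _ H (TF _ (half_mono_thm x y))). Qed.
Lemma half_cong x y : eqv F x y -> eqv F (half x) (half y).
Proof. intros []; split; apply half_mono; auto. Qed.
End Lift.

Class Ext (T F : Form -> Prop) : Prop := ext : forall x, T x -> F x.
#[global] Instance ext_refl T : Ext T T. Proof. intros x H; exact H. Qed.

Add Parametric Morphism (T F : Form -> Prop) (HT : DFilt T) (HF : Filt F) (E : Ext T F) : half
  with signature (eqv F) ==> (eqv F) as half_mor.
Proof. intros. apply (half_cong (T:=T) E); auto. Qed.
Add Parametric Morphism (T F : Form -> Prop) (HT : DFilt T) (HF : Filt F) (E : Ext T F) : half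
  with signature (le F) ++> (le F) as half_mor_le.
Proof. intros. apply (half_mono (T:=T) E); auto. Qed.

Section Half.
Context {T : Form -> Prop} {HT : DFilt T} {F : Form -> Prop} {HF : Filt F} {E : Ext T F}.
Local Notation "x <= y" := (le F x y).
Local Notation "x == y" := (eqv F x y) (at level 70).

Lemma L x y : eqv T x y -> x == y. Proof. apply (lift_eqv (T:=T) E). Qed.
Lemma Lle x y : le T x y -> x <= y. Proof. apply (lift_le (T:=T) E). Qed.
Lemma axF x : IsAxiom x -> F x. Proof. intros; apply fax; auto. Qed.
Lemma axeq x y : IsAxiom (Imp x y) -> IsAxiom (Imp y x) -> x == y.
Proof. intros; split; apply axF; auto. Qed.

Lemma hmono x y : x <= y -> half x <= half y. Proof. apply (half_mono (T:=T) E). Qed.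
Lemma oplus_le a a' b b' : a <= a' -> b <= b' -> oplus a b <= oplus a' b'.
Proof. intros; apply (oplus_mor_le F HF); auto. Qed.
Lemma fd3 a : Delta (sconst a) == a. Proof. apply L, d3. Qed.
Lemma fhalf_le x : half x <= x. Proof. apply Lle, half_le. Qed.
Lemma fh3 a b : Imp (half a) (half b) == Neg (half (Neg (Imp a b))). Proof. apply L, h3. Qed.
Lemma fdmono s t : (forall n, le T (s n) (t n)) -> Delta s <= Delta t.
Proof. intros; apply Lle, dmono; auto. Qed.
Lemma half_Bot : half Bot == Bot. Proof. apply bot_eqv. apply fhalf_le. Qed.

Lemma h4 : Neg (half Top) == half Top.
Proof.
  assert (A : Neg (Imp (Delta (sconst Top)) (half Top)) == half (Delta (sconst Top))).
  { apply (axeq _ _ (D1a (sconst Top)) (D1b (sconst Top))). }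
  rewrite fd3 in A. rewrite Fimp_top in A. exact A. apply FTop.
Qed.

Lemma half_s0_le s : half (s O) <= Delta s.
Proof.
  unfold half. apply fdmono. intros [|n]; simpl. apply le_refl. apply hEFQ.
Qed.

Lemma decomp s : Delta s == oplus (half (s O)) (half (Delta (stail s))).
Proof.
  assert (A : Neg (Imp (Delta s) (half (s O))) == half (Delta (stail s))).
  { apply (axeq _ _ (D1a s) (D1b s)). }
  rewrite <- A. unfold oplus. rewrite <- (cp (Imp (Delta s) (half (s O))) (half (s O))).
  change (Delta s == vee (Delta s) (half (s O))). rewrite l3. unfold vee.
  rewrite Fimp_top. reflexivity. apply half_s0_le.
Qed.

Lemma hh x : oplus (half x) (half x) == x.
Proof.
  pose proof (decomp (sconst x)) as D. change (stail (sconst x)) with (sconst x) in D.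
  rewrite fd3 in D. symmetry; exact D.
Qed.

Lemma hn x : Neg (half x) == oplus (half Top) (half (Neg x)).
Proof.
  unfold oplus. rewrite h4. rewrite fh3. rewrite (Fimp_top Top) by apply FTop.
  rewrite (dn x). reflexivity.
Qed.

Lemma half_le_top x : half x <= half Top. Proof. apply hmono. apply le_top. Qed.
Lemma no_overflow x y : half x <= Neg (half y).
Proof.
  rewrite half_le_top. rewrite <- h4. apply neg_anti. apply half_le_top.
Qed.

Lemma hK P Q : oplus (half Top) (half (Imp P Q)) == Imp (half P) (half Q).
Proof. rewrite fh3. rewrite hn. rewrite dn. reflexivity. Qed.

Lemma half_neg x : half (Neg x) == Neg (oplus (half Top) (half x)).
Proof. rewrite <- (dn (half (Neg x))). rewrite (hn (Neg x)). rewrite (dn x). reflexivity. Qed.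

Lemma HA a b : a <= Neg b -> oplus (half a) (half b) == half (oplus a b).
Proof.
  intros Hab.
  assert (E1 : oplus (half Top) (half (oplus a b)) == oplus (half Top) (oplus (half a) (half b))).
  { unfold oplus at 2. rewrite hK. rewrite <- oplus_assoc.
    rewrite <- (dn (half (Neg a))). rewrite hn. rewrite dn. reflexivity. }
  symmetry. apply (canc _ _ _ E1). exact (no_overflow _ _).
  rewrite h4. transitivity (oplus (half (Neg b)) (half b)).
  apply oplus_le. apply hmono; auto. reflexivity.
  rewrite half_neg. unfold oplus at 1. rewrite dn. rewrite canc_imp. rewrite h4. reflexivity.
  exact (no_overflow _ _).
Qed.

Lemma HD x : x <= half Top -> half (oplus x x) == x.
Proof.
  intros H. rewrite <- HA. apply hh. rewrite H at 1. rewrite <- h4. apply neg_anti. auto.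
Qed.
End Half.

Definition u (n : nat) : Form := Nat.iter n half Top.
Definition mult (k : nat) (x : Form) : Form := Nat.iter k (oplus x) Bot.
Definition c (k n : nat) : Form := mult k (u n).
Definition dbl x := oplus x x.

Section Const.
Context {T : Form -> Prop} {HT : DFilt T} {F : Form -> Prop} {HF : Filt F} {E : Ext T F}.
Local Notation "x <= y" := (le F x y).
Local Notation "x == y" := (eqv F x y) (at level 70).

Lemma oplus4 a b c d : oplus (oplus a b) (oplus c d) == oplus (oplus a c) (oplus b d).
Proof.
  rewrite !oplus_assoc. rewrite <- (oplus_assoc b c d), (oplus_comm b c), (oplus_assoc c b d). reflexivity.
Qed.
Lemma mult_S k x : mult (S k) x = oplus x (mult k x). Proof. reflexivity. Qed.
Lemma mult_cong k x y : x == y -> mult k x == mult k y.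
Proof. intros H; induction k. reflexivity. rewrite !mult_S. rewrite IHk. rewrite H. reflexivity. Qed.
Lemma mult_mono k x y : x <= y -> mult k x <= mult k y.
Proof. intros H; induction k. reflexivity. rewrite !mult_S. apply oplus_le; auto. Qed.
Lemma mult_add j k x : mult (j + k) x == oplus (mult j x) (mult k x).
Proof.
  induction j. change (mult k x == oplus Bot (mult k x)). symmetry; apply oplus_bot.
  change (mult (S j + k) x) with (oplus x (mult (j+k) x)). rewrite IHj.
  rewrite mult_S. symmetry; apply oplus_assoc.
Qed.
Lemma mult_le_k j k x : (j <= k)%nat -> mult j x <= mult k x.
Proof. intros H. replace k with (j + (k - j)) by lia. rewrite mult_add. apply le_oplus_l. Qed.
Lemma mult_oplus k x y : mult k (oplus x y) == oplus (mult k x) (mult k y).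
Proof.
  induction k. change (Bot == oplus Bot Bot). symmetry; apply oplus_bot.
  rewrite !mult_S. rewrite IHk. apply oplus4.
Qed.
Lemma mult_bot k : mult k Bot == Bot.
Proof. induction k. reflexivity. rewrite mult_S, IHk. apply oplus_bot. Qed.
Lemma mult_top k : mult (S k) Top == Top.
Proof. rewrite mult_S. apply oplus_top_l. Qed.
Lemma mult_one x : mult 1 x == x. Proof. apply oplus_bot_r. Qed.

Lemma u_S n : u (S n) = half (u n). Proof. reflexivity. Qed.
Lemma u_dbl n : oplus (u (S n)) (u (S n)) == u n. Proof. rewrite u_S. apply hh. Qed.
Lemma c_double k n : c (2 * k) (S n) == c k n.
Proof.
  unfold c. replace (2 * k) with (k + k) by lia. rewrite mult_add. rewrite <- mult_oplus.
  apply mult_cong, u_dbl.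
Qed.
Lemma c_lift k n m : c (2 ^ m * k) (m + n) == c k n.
Proof.
  induction m. simpl. replace (k + 0) with k by lia. reflexivity.
  replace (2 ^ S m * k) with (2 * (2 ^ m * k)) by (simpl; lia). change (S m + n) with (S (m + n)). rewrite c_double. auto.
Qed.
Lemma c_full n : c (2 ^ n) n == Top.
Proof.
  induction n. apply mult_top.
  replace (2 ^ S n) with (2 * 2 ^ n) by (simpl; lia). rewrite c_double. auto.
Qed.
Lemma c_le k j n : (k <= j)%nat -> c k n <= c j n. Proof. apply mult_le_k. Qed.
Lemma c_sat k n : (2 ^ n <= k)%nat -> c k n == Top.
Proof. intros H. split. apply le_top. rewrite <- (c_full n). apply c_le; auto. Qed.
Lemma c_zero n : c 0 n = Bot. Proof. reflexivity. Qed.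
Lemma c_add j k n : c (j + k) n == oplus (c j n) (c k n). Proof. apply mult_add. Qed.

Lemma negc_E n :
  (forall k, (k <= 2 ^ n)%nat -> Neg (c k n) == c (2 ^ n - k) n) ->
  (forall k, (k <= 2 ^ n)%nat -> c k (S n) == half (c k n)).
Proof.
  intros N. induction k; intros Hk.
  - unfold c; simpl. symmetry; apply half_Bot.
  - unfold c. rewrite mult_S. fold (c k (S n)). rewrite IHk by lia. rewrite u_S.
    rewrite HA. reflexivity. rewrite N by lia. rewrite <- (mult_one (u n)) at 1.
    change (c 1 n <= c (2 ^ n - k) n). apply (c_le 1 _ n). lia.
Qed.

Lemma negc_all n : forall k, (k <= 2 ^ n)%nat -> Neg (c k n) == c (2 ^ n - k) n.
Proof.
  induction n; intros k Hk.
  - simpl in Hk. destruct k as [|[|k]]; try lia.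
    + change (Neg Bot == mult 1 Top). rewrite negbot. symmetry; apply (mult_top 0).
    + change (Neg (mult 1 Top) == Bot). rewrite (mult_top 0). reflexivity.
  - pose proof (negc_E n IHn) as En.
    assert (Hhalf : c (2 ^ n) (S n) == half Top).
    { rewrite En by lia. rewrite c_full. reflexivity. }
    assert (Case1 : forall k, (k <= 2 ^ n)%nat -> Neg (c k (S n)) == c (2 ^ S n - k) (S n)).
    { intros j Hj. rewrite En by auto. rewrite hn. rewrite IHn by auto.
      rewrite <- En by lia. rewrite <- Hhalf. rewrite <- c_add.
      replace (2 ^ n + (2 ^ n - j)) with (2 ^ S n - j) by (simpl; lia). reflexivity. }
    destruct (Nat.le_gt_cases k (2 ^ n)) as [H1|H1]. auto.
    assert (H2 : (2 ^ S n - k <= 2 ^ n)%nat) by (simpl in *; lia).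
    pose proof (Case1 _ H2) as C. replace (2 ^ S n - (2 ^ S n - k)) with k in C by lia.
    rewrite <- C. apply dn.
Qed.

Lemma c_one n : c 1 n == u n. Proof. apply mult_one. Qed.

Lemma c_consistent k n : k < 2 ^ n -> F (c k n) -> F Bot.
Proof.
  intros Hk H.
  assert (H1 : F (c (2 ^ n - 1) n)). { eapply le_F; [|exact H]. apply c_le. lia. }
  assert (H2 : Neg (c (2 ^ n - 1) n) == u n).
  { rewrite negc_all by lia. replace (2 ^ n - (2 ^ n - 1)) with 1 by (pose proof (Nat.pow_nonzero 2 n); lia).
    apply c_one. }
  assert (H3 : u n <= Bot). { rewrite <- H2. rewrite (F_top _ H1). reflexivity. }
  assert (H4 : Top <= Bot). { rewrite <- (c_full n). unfold c. rewrite (mult_mono _ _ _ H3). rewrite mult_bot. reflexivity. }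
  eapply le_F. exact H4. apply FTop.
Qed.
End Const.

Add Parametric Morphism (F : Form -> Prop) (HF : Filt F) : dbl
  with signature (eqv F) ==> (eqv F) as dbl_mor.
Proof. intros. unfold dbl. rewrite H. reflexivity. Qed.

Section Arch.
Context {T : Form -> Prop} {HT : DFilt T}.
Local Notation "x <= y" := (le T x y).
Local Notation "x == y" := (eqv T x y) (at level 70).
Local Instance ET : Ext T T := ext_refl T.

Lemma dbl_mono x y : x <= y -> dbl x <= dbl y. Proof. intros; unfold dbl; apply oplus_le; auto. Qed.
Lemma iter_dbl_mono n x y : x <= y -> Nat.iter n dbl x <= Nat.iter n dbl y.
Proof. intros H; induction n; simpl; auto. apply dbl_mono; auto. Qed.
Lemma iter_dbl_u n m : Nat.iter n dbl (u (m + n)) == u m.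
Proof.
  revert m; induction n; intros m. simpl. rewrite Nat.add_0_r. reflexivity.
  change (Nat.iter (S n) dbl (u (m + S n))) with (dbl (Nat.iter n dbl (u (m + S n)))).
  replace (m + S n) with (S m + n) by lia. rewrite IHn. unfold dbl. apply u_dbl.
Qed.

Lemma arch a : (forall n, Neg a <= u n) -> T a.
Proof.
  intros H. set (d := Neg a).
  set (e := fun n => Nat.iter n dbl d).
  assert (C1 : forall n, e n <= half Top).
  { intros n. unfold e. transitivity (Nat.iter n dbl (u (S n))). apply iter_dbl_mono, H.
    pose proof (iter_dbl_u n 1) as X. simpl in X. apply eqv_le, X. }
  assert (C2 : forall n, half (e (S n)) == e n).
  { intros n. change (e (S n)) with (dbl (e n)). unfold dbl. apply HD; auto. }
  set (X := Delta e).
  assert (C3 : X == oplus (half d) X).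
  { unfold X at 1. rewrite decomp. change (e O) with d.
    assert (D2 : half (Delta (stail e)) == Delta (fun n => half (stail e n))).
    { apply axeq; constructor. }
    rewrite D2. unfold stail. rewrite (dcong _ e C2). reflexivity. }
  assert (C4 : X <= half Top).
  { unfold X. transitivity (Delta (sconst (half Top))). apply dmono; auto. apply eqv_le, d3. }
  assert (C5 : half d == Bot).
  { apply (canc0 (half d) X). symmetry; auto. rewrite C4. rewrite h4. exact (half_le_top d). }
  assert (C6 : d == Bot). { rewrite <- (hh d). rewrite C5. apply oplus_bot. }
  apply top_F. rewrite <- (dn a). fold d. rewrite C6. apply negbot.
Qed.
End Arch.

Definition ipow (n : nat) (a z : Form) : Form := Nat.iter n (Imp a) z.
Definition Gen (F : Form -> Prop) (a : Form) : Form -> Prop := fun z => exists n, F (ipow n a z).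

Section Gen.
Context {F : Form -> Prop} {HF : Filt F}.
Local Notation "x <= y" := (le F x y).

Lemma ipow_S n a z : ipow (S n) a z = Imp a (ipow n a z). Proof. reflexivity. Qed.
Lemma ipow_mono n a x y : x <= y -> ipow n a x <= ipow n a y.
Proof. intros H; induction n. exact H. rewrite !ipow_S. apply imp_mono_r; auto. Qed.
Lemma ipow_K n a x : x <= ipow n a x.
Proof. induction n. apply le_refl. rewrite ipow_S. eapply le_trans. exact IHn. apply hL1. Qed.
Lemma ipow_exch m a x y : ipow m a (Imp x y) <= Imp x (ipow m a y).
Proof.
  induction m. apply le_refl. rewrite !ipow_S. eapply le_trans. apply imp_mono_r; exact IHm. apply hC.
Qed.
Lemma ipow_add n m a z : ipow (n + m) a z = ipow n a (ipow m a z).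
Proof. unfold ipow. apply Nat.iter_add. Qed.

Lemma Gen_filt a : Filt (Gen F a).
Proof.
  split.
  - intros x Hx. exists 0. apply fax; auto.
  - intros x y [n Hn] [m Hm].
    exists (n + m). rewrite ipow_add.
    assert (H1 : F (Imp x (ipow m a y))) by exact (fmp _ _ Hm (ipow_exch m a x y)).
    exact (fmp _ _ Hn (ipow_mono n a _ _ H1)).
Qed.
Lemma Gen_incl a x : F x -> Gen F a x. Proof. intros; exists 0; auto. Qed.
Lemma Gen_a a : Gen F a a. Proof. exists 1. apply hI. Qed.

Lemma R1 x y : forall m p, F (Imp (Imp x y) p) -> F (ipow m (Imp y x) p) -> F p.
Proof.
  induction m; intros p H1 H2. exact H2.
  rewrite ipow_S in H2. set (p' := ipow m (Imp y x) p) in *.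
  assert (H3 : F (Imp (Imp x y) p')) by exact (fmp _ _ H1 (imp_mono_r _ _ _ (ipow_K m _ p))).
  pose proof (S11 x y p' H3 H2). eauto.
Qed.
Lemma R2 x y : forall n m p, F (ipow n (Imp x y) p) -> F (ipow m (Imp y x) p) -> F p.
Proof.
  induction n; intros m p H1 H2. exact H1.
  rewrite ipow_S in H1. set (p' := ipow n (Imp x y) p) in *.
  assert (H3 : F (ipow m (Imp y x) p')) by exact (fmp _ _ H2 (ipow_mono m _ _ _ (ipow_K n _ p))).
  pose proof (R1 x y m p' H1 H3). eauto.
Qed.
End Gen.

Section Prime.
Context {T : Form -> Prop} {HT : DFilt T}.

Definition goodF (b : Form) (B : Form -> Prop) : Prop :=
  (forall x, B x -> False) \/ (Filt B /\ (forall x, T x -> B x) /\ ~ B b).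

Lemma prime_ext b : ~ T b -> exists F, Filt F /\ Ext T F /\ ~ F b /\
   (forall x y, F (Imp x y) \/ F (Imp y x)).
Proof.
  intros Hb.
  destruct (@classical_sets.Zorn_bigcup Form (goodF b)) as [A [GA MA]].
  - intros Fam Hsub Htot.
    destruct (classic (exists X, Fam X /\ exists x, X x)) as [[X0 [HX0 [x0 Hx0]]]|Hno].
    + right.
      assert (GX : forall X, Fam X -> (exists x, X x) -> Filt X /\ (forall x, T x -> X x) /\ ~ X b).
      { intros X HX [x Hx]. destruct (Hsub X HX) as [Hn|Hy]. exfalso; eauto. exact Hy. }
      split; [split|split].
      * intros x Hx. exists X0; auto. destruct (GX X0 HX0 (ex_intro _ _ Hx0)) as [FX _]. exact (@fax X0 FX x Hx).
      * intros x y [X HX Hx] [Y HY Hy].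
        destruct (GX X HX (ex_intro _ _ Hx)) as [FX _]. destruct (GX Y HY (ex_intro _ _ Hy)) as [FY _].
        destruct (Htot X Y HX HY) as [S|S].
        exists Y; auto. apply (@fmp Y FY x y); auto.
        exists X; auto. apply (@fmp X FX x y); auto.
      * intros x Hx. exists X0; auto. destruct (GX X0 HX0 (ex_intro _ _ Hx0)) as [_ [HT0 _]]; auto.
      * intros [X HX Hxb]. destruct (GX X HX (ex_intro _ _ Hxb)) as [_ [_ Hn]]; auto.
    + left. intros x [X HX Hx]. apply Hno; eauto.
  - destruct GA as [Aempty|[FA [TA bA]]].
    + exfalso. apply (MA T).
      split. intros x Hx; exfalso; eauto. intros Hs. apply (Aempty Top). apply Hs. apply (@FTop T _).
      right. split; [exact dfilt|]. split; auto.
    + exists A. split; [exact FA|]. split; [exact TA|]. split; [exact bA|].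
      assert (Max : forall a, ~ A a -> exists n, A (ipow n a b)).
      { intros a Ha. apply NNPP. intros Hn. apply (MA (Gen A a)).
        split. intros x Hx; apply Gen_incl; auto. intros Hs. apply Ha, Hs, Gen_a.
        right. split. apply Gen_filt. split. intros x Hx; apply Gen_incl; auto.
        intros [n Hnb]. apply Hn; eauto. }
      intros x y. apply NNPP. intros Hxy.
      assert (H1 : ~ A (Imp x y)) by (intro; apply Hxy; auto).
      assert (H2 : ~ A (Imp y x)) by (intro; apply Hxy; auto).
      destruct (Max _ H1) as [n Hn]. destruct (Max _ H2) as [m Hm].
      apply bA. exact (R2 x y n m b Hn Hm).
Qed.
End Prime.

Record Pf (Th : Form -> Prop) (phi : Form) : Type := mkPf {
  pI : Type; plt : pI -> pI -> Prop; ptop : pI; pa : pI -> Form;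
  pok : is_proof Th phi pI plt ptop pa }.
Arguments pI {Th phi}. Arguments plt {Th phi}. Arguments ptop {Th phi}. Arguments pa {Th phi}. Arguments pok {Th phi}.

Lemma to_pf Th phi : Provable Th phi -> Pf Th phi.
Proof.
  intros H. apply constructive_indefinite_description in H. destruct H as [I H].
  apply constructive_indefinite_description in H. destruct H as [lt H].
  apply constructive_indefinite_description in H. destruct H as [top H].
  apply constructive_indefinite_description in H. destruct H as [a H].
  exact (mkPf Th phi I lt top a H).
Qed.

Section Comb.
Variable Th : Form -> Prop.
Variable fam : nat -> Form.
Variable P : forall n, Pf Th (fam n).
Variable phi : Form.
Hypothesis J : IsAxiom phi \/ Th phi \/ (exists n1 n2, fam n2 = Imp (fam n1) phi) \/ phi = Delta fam.

Let I n := pI (P n).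
Let ltn n := plt (P n).
Let an n := pa (P n).
Definition JT := {n : nat & pI (P n)}.
Definition ltJ (x y : JT) : Prop :=
  projT1 x < projT1 y \/ (exists n (i j : pI (P n)), x = existT _ n i /\ y = existT _ n j /\ plt (P n) i j).
Definition lt' (x y : option JT) : Prop :=
  match x, y with
  | Some x, Some y => ltJ x y
  | Some _, None => True
  | None, _ => False
  end.
Definition a' (x : option JT) : Form :=
  match x with Some (existT _ n i) => pa (P n) i | None => phi end.

Lemma inj n i j : existT (fun n => pI (P n)) n i = existT _ n j -> i = j.
Proof. apply inj_pair2_eq_dec, Nat.eq_dec. Qed.

Lemma exinv n m i j : existT (fun n => pI (P n)) n i = existT _ m j -> n = m.
Proof. intros H. apply (f_equal (@projT1 _ _)) in H. exact H. Qed.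
Ltac exs := repeat match goal with
  | H : existT _ ?n ?i = existT _ ?m ?j |- _ =>
      let e := fresh in assert (e := exinv _ _ _ _ H); subst n || subst m; apply inj in H; subst
  end.

Lemma wf_n n : well_founded (plt (P n)). Proof. destruct (pok (P n)) as [W _]. exact W. Qed.

Lemma acc_some : forall n i, Acc lt' (Some (existT _ n i)).
Proof.
  intros n. induction n as [n IHn] using lt_wf_ind.
  intros i. induction i as [i IHi] using (well_founded_ind (wf_n n)).
  constructor. intros [[m j]|] H; simpl in H; [|contradiction].
  destruct H as [H|(n' & i' & j' & E1 & E2 & H)].
  - simpl in H. apply IHn; auto.
  - exs. apply IHi; auto.
Qed.
Lemma wf' : well_founded lt'.
Proof.
  intros [[n i]|]. apply acc_some. constructor. intros [[n i]|] H. apply acc_some. contradiction.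
Qed.
Lemma trans' x y z : lt' x y -> lt' y z -> lt' x z.
Proof.
  destruct x as [[n i]|], y as [[m j]|], z as [[k l]|]; simpl; auto; try contradiction.
  intros [H1|(n1 & i1 & j1 & E1 & E2 & H1)] [H2|(n2 & i2 & j2 & E3 & E4 & H2)].
  - left; simpl in *; lia.
  - exs. simpl in *. left; simpl; lia.
  - exs. simpl in *. left; simpl; lia.
  - exs. right. eexists _, _, _. split; [reflexivity|]. split; [reflexivity|].
    match goal with |- plt (P ?n) _ _ => destruct (pok (P n)) as [_ [T _]] end. eauto.
Qed.
Lemma total' x y : lt' x y \/ x = y \/ lt' y x.
Proof.
  destruct x as [[n i]|], y as [[m j]|]; simpl; auto.
  destruct (lt_eq_lt_dec n m) as [[H|H]|H].
  - left; left; auto.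
  - subst m. destruct (pok (P n)) as [_ [_ [Tot _]]]. destruct (Tot i j) as [H|[H|H]].
    + left. right. exists n, i, j. auto.
    + subst; auto.
    + right; right. right. exists n, j, i. auto.
  - right; right; left; auto.
Qed.
Lemma count' : exists enc : option JT -> nat, forall x y, enc x = enc y -> x = y.
Proof.
  assert (E : forall n, {e : pI (P n) -> nat | forall i j, e i = e j -> i = j}).
  { intros n. apply constructive_indefinite_description. destruct (pok (P n)) as [_ [_ [_ [C _]]]]. exact C. }
  exists (fun x => match x with None => 0 | Some (existT _ n i) => S (Cantor.to_nat (n, proj1_sig (E n) i)) end).
  intros [[n i]|] [[m j]|] H; try discriminate; auto.
  assert (H' : Cantor.to_nat (n, proj1_sig (E n) i) = Cantor.to_nat (m, proj1_sig (E m) j))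
    by (injection H as H0; exact H0). clear H. rename H' into H. apply Cantor.to_nat_inj in H.
  injection H as H1 H2. subst m. apply (proj2_sig (E n)) in H2. subst; auto.
Qed.

Lemma comb : Provable Th phi.
Proof.
  exists (option JT), lt', None, a'.
  split; [exact wf'|]. split; [exact trans'|]. split; [exact total'|]. split; [exact count'|].
  split. intros [x|]; simpl; auto. split. reflexivity.
  intros [[n i]|].
  - simpl. destruct (pok (P n)) as [_ [_ [_ [_ [_ [Htop Hj]]]]]].
    destruct (Hj i) as [H|[H|[(j & k & Hjl & Hkl & Hk)|(g & Hg & Hd)]]]; auto.
    + right; right; left. exists (Some (existT _ n j)), (Some (existT _ n k)). simpl.
      split. right. exists n, j, i; auto. split. right. exists n, k, i; auto. exact Hk.
    + right; right; right. exists (fun m => Some (existT _ n (g m))). split.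
      intros m. simpl. right. exists n, (g m), i. auto. simpl. exact Hd.
  - simpl. destruct J as [H|[H|[(n1 & n2 & H)|H]]]; auto.
    + right; right; left. exists (Some (existT _ n1 (ptop (P n1)))), (Some (existT _ n2 (ptop (P n2)))).
      simpl. split; auto. split; auto.
      destruct (pok (P n1)) as [_ [_ [_ [_ [_ [T1 _]]]]]]. destruct (pok (P n2)) as [_ [_ [_ [_ [_ [T2 _]]]]]].
      rewrite T1, T2. exact H.
    + right; right; right. exists (fun m => Some (existT _ m (ptop (P m)))). split. intros; simpl; auto.
      simpl. rewrite H. f_equal. apply FunctionalExtensionality.functional_extensionality. intros m.
      destruct (pok (P m)) as [_ [_ [_ [_ [_ [Tm _]]]]]]. symmetry; exact Tm.
Qed.
End Comb.

Lemma prov_base Th phi : IsAxiom phi \/ Th phi -> Provable Th phi.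
Proof.
  intros H. exists unit, (fun _ _ => False), tt, (fun _ => phi).
  split. intros x; constructor; intros y []. split. intros ? ? ? []. split. intros [] []; auto.
  split. exists (fun _ => 0). intros [] []; auto. split. intros []; auto. split. auto.
  intros _. destruct H; auto.
Qed.

Inductive Der (Th : Form -> Prop) : Form -> Prop :=
| der_ax x : IsAxiom x -> Der Th x
| der_hyp x : Th x -> Der Th x
| der_mp x y : Der Th x -> Der Th (Imp x y) -> Der Th y
| der_del s : (forall n, Der Th (s n)) -> Der Th (Delta s).

Lemma Der_Prov Th phi : Der Th phi -> Provable Th phi.
Proof.
  induction 1.
  - apply prov_base; auto.
  - apply prov_base; auto.
  - set (fam := fun n => match n with 0 => x | S _ => Imp x y end).
    set (P := fun n => match n return Pf Th (fam n) with 0 => to_pf _ _ IHDer1 | S _ => to_pf _ _ IHDer2 end).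
    apply (comb Th fam P y). right; right; left. exists 0, 1. reflexivity.
  - apply (comb Th s (fun n => to_pf _ _ (H0 n)) (Delta s)). right; right; right. reflexivity.
Qed.

Open Scope R_scope.

Definition dy (k n : nat) : R := INR k / 2 ^ n.

Lemma pow2_pos n : 0 < 2 ^ n. Proof. apply pow_lt; lra. Qed.
Lemma INR_pow2 n : INR (2 ^ n)%nat = 2 ^ n.
Proof. rewrite pow_INR. simpl. replace (1+1) with 2 by lra. reflexivity. Qed.
Lemma dy_le1 k n : (k <= 2 ^ n)%nat -> dy k n <= 1.
Proof. intros H. unfold dy. apply le_INR in H. rewrite INR_pow2 in H. pose proof (pow2_pos n).
  apply Rmult_le_reg_r with (2^n); auto. field_simplify; lra. Qed.
Lemma dy_ge0 k n : 0 <= dy k n.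
Proof. unfold dy. pose proof (pos_INR k); pose proof (pow2_pos n). apply Rmult_le_pos; auto. left; apply Rinv_0_lt_compat; lra. Qed.
Lemma dy_lt_iff j m k n : dy j m < dy k n <-> (2 ^ n * j < 2 ^ m * k)%nat.
Proof.
  unfold dy. pose proof (pow2_pos n); pose proof (pow2_pos m). split; intros H1.
  - apply INR_lt. rewrite !mult_INR, !INR_pow2.
    apply Rmult_lt_compat_r with (r := 2^m * 2^n) in H1; [|apply Rmult_lt_0_compat; lra].
    field_simplify in H1; lra.
  - apply lt_INR in H1. rewrite !mult_INR, !INR_pow2 in H1.
    apply Rmult_lt_reg_r with (2^m * 2^n); [apply Rmult_lt_0_compat; lra|]. field_simplify; lra.
Qed.
Lemma dy_lift k n m : dy (2 ^ m * k) (m + n) = dy k n.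
Proof.
  unfold dy. rewrite mult_INR, INR_pow2, pow_add. pose proof (pow2_pos n); pose proof (pow2_pos m).
  field. lra.
Qed.
Lemma dy_compl k n : (k <= 2 ^ n)%nat -> dy (2 ^ n - k) n = 1 - dy k n.
Proof. intros H. unfold dy. rewrite minus_INR by auto. rewrite INR_pow2. pose proof (pow2_pos n). field; lra. Qed.

Lemma density a b : 0 <= a -> a < b -> b <= 1 ->
  exists k n, (k <= 2 ^ n)%nat /\ a < dy k n /\ dy k n < b.
Proof.
  intros Ha Hab Hb.
  destruct (pow_lt_1_zero (/2) ltac:(rewrite Rabs_pos_eq; lra) (b - a) ltac:(lra)) as [N HN].
  specialize (HN N (Nat.le_refl N)). rewrite Rabs_pos_eq in HN by (apply pow_le; lra).
  rewrite pow_inv in HN. pose proof (pow2_pos N).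
  set (r := a * 2 ^ N). destruct (archimed r) as [A1 A2].
  assert (Hz : (0 <= up r)%Z). { apply le_IZR. assert (0 <= r) by (unfold r; apply Rmult_le_pos; lra). lra. }
  exists (Z.to_nat (up r)), N.
  assert (E : INR (Z.to_nat (up r)) = IZR (up r)). { rewrite INR_IZR_INZ, Z2Nat.id; auto. }
  assert (K1 : a < dy (Z.to_nat (up r)) N).
  { unfold dy. rewrite E. apply Rmult_lt_reg_r with (2^N); auto. field_simplify; unfold r in *; lra. }
  assert (K2 : dy (Z.to_nat (up r)) N < b).
  { unfold dy. rewrite E. apply Rmult_lt_reg_r with (2^N); auto.
    replace (IZR (up r) / 2 ^ N * 2 ^ N) with (IZR (up r)) by (field; lra).
    apply Rmult_lt_compat_r with (r := 2^N) in HN; auto.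
    rewrite Rinv_l in HN by lra. unfold r in *. nra. }
  split; [|split; auto].
  apply INR_le. rewrite E, INR_pow2. unfold dy in K2. rewrite E in K2.
  apply Rmult_lt_compat_r with (r := 2^N) in K2; auto.
  replace (IZR (up r) / 2 ^ N * 2 ^ N) with (IZR (up r)) in K2 by (field; lra). nra.
Qed.

Section Val.
Context {T : Form -> Prop} {HT : DFilt T} {F : Form -> Prop} {HF : Filt F} {E : Ext T F}.
Hypothesis nb : ~ F Bot.
Hypothesis lin : forall x y, F (Imp x y) \/ F (Imp y x).

Definition Es (psi : Form) : R -> Prop :=
  fun r => exists k n, (k <= 2 ^ n)%nat /\ r = dy k n /\ le F (c k n) psi.

Lemma Es_bound psi : bound (Es psi).
Proof. exists 1. intros r (k & n & Hk & -> & _). apply dy_le1; auto. Qed.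
Lemma Es_ne psi : exists r, Es psi r.
Proof. exists (dy 0 0). exists 0%nat, 0%nat. split. simpl; lia. split; auto. apply bot_le. Qed.

Definition v (psi : Form) : R := proj1_sig (completeness (Es psi) (Es_bound psi) (Es_ne psi)).
Set Default Proof Using "All".
Lemma v_lub psi : is_lub (Es psi) (v psi).
Proof. unfold v. destruct completeness; auto. Qed.

Lemma v_ge k n psi : (k <= 2 ^ n)%nat -> le F (c k n) psi -> dy k n <= v psi.
Proof. intros. apply (v_lub psi). exists k, n. auto. Qed.

Lemma c_imp A B N : (A <= 2 ^ N)%nat -> eqv F (Imp (c A N) (c B N)) (c (2 ^ N - A + B) N).
Proof.
  intros HA. rewrite c_add. rewrite <- (negc_all (T:=T)) by auto. unfold oplus. rewrite dn. reflexivity.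
Qed.

Lemma cmp j m k n : (j <= 2 ^ m)%nat -> (k <= 2 ^ n)%nat -> le F (c j m) (c k n) -> dy j m <= dy k n.
Proof.
  intros Hj Hk H. destruct (Rle_lt_dec (dy j m) (dy k n)) as [|Hlt]; auto. exfalso. apply nb.
  apply dy_lt_iff in Hlt.
  rewrite <- (c_lift (T:=T) j m n), <- (c_lift (T:=T) k n m) in H. rewrite (Nat.add_comm m n) in H.
  assert (HJ : (2 ^ n * j <= 2 ^ (n + m))%nat). { rewrite Nat.pow_add_r. apply Nat.mul_le_mono_l; auto. }
  pose proof (c_imp _ (2 ^ m * k) _ HJ) as CI.
  assert (Hf : F (c (2 ^ (n + m) - 2 ^ n * j + 2 ^ m * k) (n + m))).
  { rewrite <- CI. exact H. }
  eapply (c_consistent (T:=T)); [|exact Hf]. lia.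
Qed.

Lemma v_le k n psi : (k <= 2 ^ n)%nat -> le F psi (c k n) -> v psi <= dy k n.
Proof.
  intros Hk H. apply (v_lub psi). intros r (j & m & Hj & -> & Hc).
  apply cmp; auto. eapply le_trans; eauto.
Qed.
Lemma v_lt_ge k n psi : (k <= 2 ^ n)%nat -> dy k n < v psi -> le F (c k n) psi.
Proof.
  intros Hk H. destruct (lin (c k n) psi) as [|H2]; auto. pose proof (v_le _ _ _ Hk H2). lra.
Qed.
Lemma v_gt_le k n psi : (k <= 2 ^ n)%nat -> v psi < dy k n -> le F psi (c k n).
Proof.
  intros Hk H. destruct (lin (c k n) psi) as [H2|]; auto. pose proof (v_ge _ _ _ Hk H2). lra.
Qed.
Lemma v_range psi : 0 <= v psi <= 1.
Proof.
  split. pose proof (v_ge 0 0 psi ltac:(simpl; lia) (bot_le psi)). unfold dy in H; simpl in H. lra.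
  apply (v_lub psi). intros r (k & n & Hk & -> & _). apply dy_le1; auto.
Qed.
Lemma v_cong x y : eqv F x y -> v x = v y.
Proof.
  intros H. apply Rle_antisym; apply (v_lub _); intros r (k & n & Hk & -> & Hc);
  apply (v_lub _); exists k, n; repeat split; auto; [rewrite <- H|rewrite H]; auto.
Qed.

Lemma cut psi al : 0 <= al <= 1 ->
  (forall k n, (k <= 2 ^ n)%nat -> dy k n < al -> le F (c k n) psi) ->
  (forall k n, (k <= 2 ^ n)%nat -> al < dy k n -> le F psi (c k n)) -> v psi = al.
Proof.
  intros Hal H1 H2. pose proof (v_range psi).
  destruct (Rtotal_order (v psi) al) as [Hl|[Heq|Hg]]; auto.
  - destruct (density (v psi) al) as (k & n & Hk & A1 & A2); try lra.
    pose proof (v_ge _ _ _ Hk (H1 _ _ Hk A2)). lra.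
  - destruct (density al (v psi)) as (k & n & Hk & A1 & A2); try lra.
    pose proof (v_le _ _ _ Hk (H2 _ _ Hk A1)). lra.
Qed.
End Val.

Open Scope R_scope.
Set Default Proof Using "All".

Lemma small_N (eps : R) (n : nat) : 0 < eps -> exists N, (n <= N)%nat /\ 3 / 2 ^ N < eps.
Proof.
  intros He. destruct (pow_lt_1_zero (/2) ltac:(rewrite Rabs_pos_eq; lra) (eps/3) ltac:(lra)) as [N0 HN].
  exists (Nat.max N0 n). split. lia. specialize (HN (Nat.max N0 n) ltac:(lia)).
  rewrite Rabs_pos_eq in HN by (apply pow_le; lra). rewrite pow_inv in HN.
  pose proof (pow2_pos (Nat.max N0 n)). unfold Rdiv. lra.
Qed.

Section Val2.
Context {T : Form -> Prop} {HT : DFilt T} {F : Form -> Prop} {HF : Filt F} {E : Ext T F}.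
Hypothesis nb : ~ F Bot.
Hypothesis lin : forall x y, F (Imp x y) \/ F (Imp y x).
Local Notation v := (v (F:=F)).

Lemma lift_to k n N : (n <= N)%nat -> eqv F (c k n) (c (2 ^ (N - n) * k) N) /\ dy k n = dy (2 ^ (N - n) * k) N.
Proof.
  intros H. pose proof (c_lift (T:=T) k n (N - n)) as A. pose proof (dy_lift k n (N - n)) as B.
  replace (N - n + n)%nat with N in A, B by lia. split; symmetry; auto.
Qed.
Lemma lift_le_pow k n N : (n <= N)%nat -> (k <= 2 ^ n)%nat -> (2 ^ (N - n) * k <= 2 ^ N)%nat.
Proof. intros. replace (2 ^ N)%nat with (2 ^ (N - n) * 2 ^ n)%nat. apply Nat.mul_le_mono_l; auto.
  rewrite <- Nat.pow_add_r. f_equal. lia. Qed.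

Lemma lo psi N : exists A, (A <= 2 ^ N)%nat /\ le F (c A N) psi /\ v psi - 2 / 2 ^ N <= dy A N.
Proof.
  pose proof (v_range nb lin psi) as Hr. pose proof (pow2_pos N).
  set (r := v psi * 2 ^ N). destruct (archimed r) as [A1 A2].
  destruct (Z_le_gt_dec (up r - 2) 0) as [Hz|Hz].
  - exists 0%nat. split. lia. split. apply bot_le.
    unfold dy; simpl. assert (IZR (up r) <= 2). { apply IZR_le in Hz. rewrite minus_IZR in Hz. simpl in Hz. lra. }
    unfold r in *. apply Rmult_le_reg_r with (2 ^ N); auto. field_simplify; lra.
  - assert (Ez : INR (Z.to_nat (up r - 2)) = IZR (up r) - 2).
    { rewrite INR_IZR_INZ, Z2Nat.id by lia. rewrite minus_IZR. reflexivity. }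
    assert (Hlt : dy (Z.to_nat (up r - 2)) N < v psi).
    { unfold dy. rewrite Ez. apply Rmult_lt_reg_r with (2 ^ N); auto.
      replace ((IZR (up r) - 2) / 2 ^ N * 2 ^ N) with (IZR (up r) - 2) by (field; lra). unfold r in *; lra. }
    assert (Hk : (Z.to_nat (up r - 2) <= 2 ^ N)%nat).
    { apply INR_le. rewrite Ez, INR_pow2. unfold dy in Hlt. rewrite Ez in Hlt.
      apply Rmult_lt_compat_r with (r := 2^N) in Hlt; auto.
      replace ((IZR (up r) - 2) / 2 ^ N * 2 ^ N) with (IZR (up r) - 2) in Hlt by (field; lra). nra. }
    exists (Z.to_nat (up r - 2)). split; auto. split. apply v_lt_ge; auto.
    unfold dy. rewrite Ez. apply Rmult_le_reg_r with (2 ^ N); auto.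
    replace ((IZR (up r) - 2) / 2 ^ N * 2 ^ N) with (IZR (up r) - 2) by (field; lra).
    replace ((v psi - 2 / 2 ^ N) * 2 ^ N) with (r - 2) by (unfold r; field; lra). lra.
Qed.

Lemma hi psi N : exists B, (B <= 2 ^ N)%nat /\ le F psi (c B N) /\ dy B N <= v psi + 1 / 2 ^ N.
Proof.
  pose proof (v_range nb lin psi) as Hr. pose proof (pow2_pos N).
  set (r := v psi * 2 ^ N). destruct (archimed r) as [A1 A2].
  assert (Hz : (0 <= up r)%Z). { apply le_IZR. assert (0 <= r) by (unfold r; apply Rmult_le_pos; lra). lra. }
  assert (Ez : INR (Z.to_nat (up r)) = IZR (up r)). { rewrite INR_IZR_INZ, Z2Nat.id; auto. }
  destruct (le_lt_dec (2 ^ N) (Z.to_nat (up r))) as [Hb|Hb].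
  - exists (2 ^ N)%nat. split. lia. split. rewrite (c_full (T:=T)). apply le_top.
    unfold dy. rewrite INR_pow2. apply le_INR in Hb. rewrite Ez, INR_pow2 in Hb.
    replace (2 ^ N / 2 ^ N) with 1 by (field; lra).
    apply Rmult_le_reg_r with (2 ^ N); auto.
    replace ((v psi + 1 / 2 ^ N) * 2 ^ N) with (r + 1) by (unfold r; field; lra). lra.
  - exists (Z.to_nat (up r)). split. lia.
    assert (Hlt : v psi < dy (Z.to_nat (up r)) N).
    { unfold dy. rewrite Ez. apply Rmult_lt_reg_r with (2 ^ N); auto.
      replace (IZR (up r) / 2 ^ N * 2 ^ N) with (IZR (up r)) by (field; lra). unfold r in *; lra. }
    split. apply v_gt_le; auto. lia.
    unfold dy. rewrite Ez. apply Rmult_le_reg_r with (2 ^ N); auto.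
    replace (IZR (up r) / 2 ^ N * 2 ^ N) with (IZR (up r)) by (field; lra).
    replace ((v psi + 1 / 2 ^ N) * 2 ^ N) with (r + 1) by (unfold r; field; lra). lra.
Qed.

Lemma v_neg x : v (Neg x) = 1 - v x.
Proof.
  pose proof (v_range nb lin x) as Hx. apply cut; auto. lra.
  - intros k n Hk H. assert (Hk' : (2 ^ n - k <= 2 ^ n)%nat) by lia.
    assert (H1 : v x < dy (2 ^ n - k) n) by (rewrite dy_compl; auto; lra).
    pose proof (v_gt_le nb lin _ _ _ Hk' H1) as H2. apply neg_anti in H2.
    rewrite (negc_all (T:=T)) in H2 by auto. replace (2 ^ n - (2 ^ n - k))%nat with k in H2 by lia. auto.
  - intros k n Hk H. assert (Hk' : (2 ^ n - k <= 2 ^ n)%nat) by lia.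
    assert (H1 : dy (2 ^ n - k) n < v x) by (rewrite dy_compl; auto; lra).
    pose proof (v_lt_ge nb lin _ _ _ Hk' H1) as H2. apply neg_anti in H2.
    rewrite (negc_all (T:=T)) in H2 by auto. replace (2 ^ n - (2 ^ n - k))%nat with k in H2 by lia. auto.
Qed.

Lemma c_le' A B N : (A <= B)%nat -> le F (c A N) (c B N). Proof. apply c_le. Qed.

Lemma v_imp x y : v (Imp x y) = Rmin 1 (1 - v x + v y).
Proof.
  pose proof (v_range nb lin x) as Rx; pose proof (v_range nb lin y) as Ry.
  apply cut; auto. split. apply Rmin_glb; lra. apply Rmin_l.
  - intros k n Hk H. assert (Hal : dy k n < 1 - v x + v y) by (eapply Rlt_le_trans; [exact H|apply Rmin_r]).
    destruct (small_N (1 - v x + v y - dy k n) n) as (N & HnN & HN); [lra|].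
    destruct (lo y N) as (B & HB & HBy & HBv). destruct (hi x N) as (A & HA & HAx & HAv).
    destruct (lift_to k n N HnN) as [L1 L2]. rewrite L1.
    transitivity (Imp (c A N) (c B N)); [|apply le_imp; auto].
    rewrite (c_imp nb lin A B N HA). apply c_le'.
    assert (HI : INR (2 ^ (N - n) * k) < INR (2 ^ N - A + B)); [|apply INR_lt in HI; lia].
    rewrite plus_INR, minus_INR by auto. rewrite INR_pow2.
    unfold dy in *. pose proof (pow2_pos N).
    apply Rmult_lt_reg_r with (/ 2 ^ N). apply Rinv_0_lt_compat; auto.
    assert (W : 2 ^ N * / 2 ^ N = 1) by (field; lra).
    rewrite L2 in HN. unfold Rdiv in *. rewrite Rmult_plus_distr_r, Rmult_minus_distr_r. lra.
  - intros k n Hk H.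
    assert (Hal : Rmin 1 (1 - v x + v y) = 1 - v x + v y).
    { apply Rmin_right. destruct (Rle_lt_dec (1 - v x + v y) 1); auto.
      rewrite Rmin_left in H by lra. pose proof (dy_le1 _ _ Hk). lra. }
    rewrite Hal in H.
    destruct (small_N (dy k n - (1 - v x + v y)) n) as (N & HnN & HN); [lra|].
    destruct (lo x N) as (A & HA & HAx & HAv). destruct (hi y N) as (B & HB & HBy & HBv).
    destruct (lift_to k n N HnN) as [L1 L2]. rewrite L1.
    transitivity (Imp (c A N) (c B N)); [apply le_imp; auto|].
    rewrite (c_imp nb lin A B N HA). apply c_le'.
    assert (HI : INR (2 ^ N - A + B) < INR (2 ^ (N - n) * k)); [|apply INR_lt in HI; lia].
    rewrite plus_INR, minus_INR by auto. rewrite INR_pow2.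
    unfold dy in *. pose proof (pow2_pos N).
    apply Rmult_lt_reg_r with (/ 2 ^ N). apply Rinv_0_lt_compat; auto.
    assert (W : 2 ^ N * / 2 ^ N = 1) by (field; lra).
    rewrite L2 in HN. unfold Rdiv in *. rewrite Rmult_plus_distr_r, Rmult_minus_distr_r. lra.
Qed.
End Val2.

Open Scope R_scope.
Set Default Proof Using "All".

Section Val3.
Context {T : Form -> Prop} {HT : DFilt T} {F : Form -> Prop} {HF : Filt F} {E : Ext T F}.
Hypothesis nb : ~ F Bot.
Hypothesis lin : forall x y, F (Imp x y) \/ F (Imp y x).
Local Notation v := (v (F:=F)).

Lemma v_half x : v (half x) = v x / 2.
Proof.
  pose proof (v_range nb lin x) as Hx. apply (cut nb); auto. split; lra.
  - intros k n Hk H. assert (H2k : (2 * k <= 2 ^ n)%nat).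
    { assert (dy k n <= /2) by lra. unfold dy in H0. pose proof (pow2_pos n).
      apply INR_le. rewrite mult_INR, INR_pow2. simpl INR.
      apply Rmult_le_compat_r with (r := 2^n) in H0; [|lra]. field_simplify in H0; lra. }
    assert (Hlt : dy (2 * k) n < v x).
    { unfold dy in *. rewrite mult_INR. simpl INR. pose proof (pow2_pos n). unfold Rdiv in *. nra. }
    pose proof (v_lt_ge nb lin _ _ _ H2k Hlt) as C.
    rewrite <- (c_double (T:=T) k n). rewrite (negc_E (T:=T) n (negc_all (T:=T) n) _ H2k).
    apply (hmono (T:=T)). exact C.
  - intros k n Hk H.
    set (m := Nat.min (2 * k) (2 ^ n)).
    assert (Hm : (m <= 2 ^ n)%nat) by (unfold m; lia).
    assert (C : le F x (c m n)).
    { unfold m. destruct (Nat.le_gt_cases (2 ^ n) (2 * k)).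
      rewrite Nat.min_r by auto. rewrite (c_full (T:=T)). apply le_top.
      rewrite Nat.min_l by lia. apply (v_gt_le nb lin). lia.
      unfold dy in *. rewrite mult_INR. simpl INR. pose proof (pow2_pos n). unfold Rdiv in *. nra. }
    apply (hmono (T:=T)) in C. rewrite <- (negc_E (T:=T) n (negc_all (T:=T) n) _ Hm) in C.
    rewrite C. rewrite <- (c_double (T:=T) k n). apply c_le. unfold m; lia.
Qed.

Lemma v_oplus a b : v (oplus a b) = Rmin 1 (v a + v b).
Proof. unfold oplus. rewrite (v_imp nb lin), (v_neg nb lin). f_equal. ring. Qed.

Lemma v_decomp s : v (Delta s) = v (s O) / 2 + v (Delta (stail s)) / 2.
Proof.
  rewrite (v_cong nb lin _ _ (decomp (T:=T) s)). rewrite v_oplus, !v_half.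
  pose proof (v_range nb lin (s O)); pose proof (v_range nb lin (Delta (stail s))).
  apply Rmin_right. lra.
Qed.

Lemma iter_stail_pt k s n : Nat.iter k stail s n = s (k + n)%nat.
Proof. revert n; induction k; intros n; simpl. reflexivity. unfold stail. rewrite IHk. f_equal. lia. Qed.
Lemma iter_stail_0 k s : Nat.iter k stail s O = s k.
Proof. rewrite iter_stail_pt. f_equal. lia. Qed.

Lemma v_partial s N : sum_f_R0 (fun i => v (s i) / 2 ^ (S i)) N + v (Delta (Nat.iter (S N) stail s)) / 2 ^ (S N) = v (Delta s).
Proof.
  induction N.
  - simpl. rewrite (v_decomp s). field.
  - rewrite <- IHN. simpl sum_f_R0. rewrite (v_decomp (Nat.iter (S N) stail s)).
    rewrite iter_stail_0. change (stail (Nat.iter (S N) stail s)) with (Nat.iter (S (S N)) stail s).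
    pose proof (pow2_pos N). simpl pow. field. lra.
Qed.

Lemma v_delta s : infinite_sum (fun n => v (s n) / 2 ^ (S n)) (v (Delta s)).
Proof.
  intros eps He.
  destruct (pow_lt_1_zero (/2) ltac:(rewrite Rabs_pos_eq; lra) eps He) as [N HN].
  exists N. intros n Hn. unfold R_dist. rewrite <- (v_partial s n).
  replace (sum_f_R0 (fun i : nat => v (s i) / 2 ^ S i) n -
    (sum_f_R0 (fun i : nat => v (s i) / 2 ^ S i) n + v (Delta (Nat.iter (S n) stail s)) / 2 ^ S n))
    with (- (v (Delta (Nat.iter (S n) stail s)) / 2 ^ S n)) by ring.
  rewrite Rabs_Ropp. pose proof (v_range nb lin (Delta (Nat.iter (S n) stail s))).
  pose proof (pow2_pos (S n)). specialize (HN (S n) ltac:(lia)).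
  rewrite Rabs_pos_eq in HN by (apply pow_le; lra). rewrite pow_inv in HN.
  rewrite Rabs_pos_eq. apply Rle_lt_trans with (1 / 2 ^ S n). unfold Rdiv.
  apply Rmult_le_compat_r; [left; apply Rinv_0_lt_compat|]; lra. unfold Rdiv; lra.
  unfold Rdiv. apply Rmult_le_pos; [lra|left; apply Rinv_0_lt_compat; lra].
Qed.

Lemma v_valuation : valuation v.
Proof.
  split; [|split; [|split]].
  - apply (v_range nb lin).
  - apply (v_neg nb lin).
  - apply (v_imp nb lin).
  - apply v_delta.
Qed.

Lemma v_top x : F x -> v x = 1.
Proof.
  intros H. apply (cut nb lin); [split; lra| |].
  - intros k n Hk _. apply F_le; auto.
  - intros k n Hk Hl. pose proof (dy_le1 _ _ Hk). lra.
Qed.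

Lemma v_less a n : le F a (Neg (u n)) -> v a < 1.
Proof.
  intros H. rewrite <- c_one in H. rewrite (negc_all (T:=T)) in H by (pose proof (Nat.pow_nonzero 2 n); lia).
  assert (Hk : (2 ^ n - 1 <= 2 ^ n)%nat) by lia.
  pose proof (v_le nb lin _ _ _ Hk H). rewrite dy_compl in H0 by (pose proof (Nat.pow_nonzero 2 n); lia).
  unfold dy in H0. simpl INR in H0. pose proof (pow2_pos n). assert (0 < 1 / 2 ^ n) by (unfold Rdiv; apply Rmult_lt_0_compat; [lra|apply Rinv_0_lt_compat; lra]). lra.
Qed.
End Val3.

Open Scope R_scope.

Lemma sum_ext a b N : (forall n, a n = b n) -> sum_f_R0 a N = sum_f_R0 b N.
Proof. intros H; induction N; simpl; rewrite ?IHN, ?H; auto. Qed.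
Lemma sum_lin a b p q N : sum_f_R0 (fun n => p * a n + q * b n) N = p * sum_f_R0 a N + q * sum_f_R0 b N.
Proof. induction N; simpl; [|rewrite IHN]; ring. Qed.
Lemma is_lin a b la lb p q : infinite_sum a la -> infinite_sum b lb ->
  infinite_sum (fun n => p * a n + q * b n) (p * la + q * lb).
Proof.
  intros Ha Hb. assert (U : Un_cv (fun N => p * sum_f_R0 a N + q * sum_f_R0 b N) (p * la + q * lb)).
  { apply CV_plus; apply (CV_mult (fun _ => _)); auto; intros e He; exists 0%nat; intros; unfold Rdist;
    rewrite Rminus_diag, Rabs_R0; auto. }
  intros e He. destruct (U e He) as [N HN]. exists N. intros n Hn. rewrite sum_lin. auto.
Qed.
Lemma is_scale a l p : infinite_sum a l -> infinite_sum (fun n => p * a n) (p * l).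
Proof.
  intros H. assert (U : Un_cv (fun N => p * sum_f_R0 a N) (p * l)).
  { apply (CV_mult (fun _ => p)); auto. intros e He; exists 0%nat; intros; unfold Rdist;
    rewrite Rminus_diag, Rabs_R0; auto. }
  intros e He. destruct (U e He) as [N HN]. exists N. intros n Hn.
  replace (sum_f_R0 (fun n => p * a n) n) with (p * sum_f_R0 a n). auto.
  clear. induction n; simpl; [|rewrite <- IHn]; ring.
Qed.
Lemma is_ext a b l : (forall n, a n = b n) -> infinite_sum a l -> infinite_sum b l.
Proof. intros E H e He. destruct (H e He) as [N HN]. exists N; intros n Hn. rewrite <- (sum_ext a b) by auto. auto. Qed.
Lemma is_le a b la lb : (forall n, a n <= b n) -> infinite_sum a la -> infinite_sum b lb -> la <= lb.
Proof.
  intros H Ha Hb. apply Rle_cv_lim with (Un := sum_f_R0 a) (Vn := sum_f_R0 b); auto.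
  intros n; induction n; simpl; auto. apply Rplus_le_compat; auto.
Qed.
Lemma geom_sum N : sum_f_R0 (fun n => 1 / 2 ^ S n) N = 1 - 1 / 2 ^ S N.
Proof. induction N. simpl; field. rewrite tech5, IHN. simpl. pose proof (pow_lt 2 N). field. lra. Qed.
Lemma is_geom : infinite_sum (fun n => 1 / 2 ^ S n) 1.
Proof.
  intros e He. destruct (pow_lt_1_zero (/2) ltac:(rewrite Rabs_pos_eq; lra) e He) as [N HN].
  exists N. intros n Hn. unfold Rdist. rewrite geom_sum. specialize (HN (S n) ltac:(lia)).
  rewrite pow_inv in HN. pose proof (pow_lt 2 (S n) ltac:(lra)).
  replace (1 - 1 / 2 ^ S n - 1) with (- (/ 2 ^ S n)) by (field; lra). rewrite Rabs_Ropp. auto.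
Qed.
Lemma is_shift a l : infinite_sum (fun n => a (S n)) l -> infinite_sum a (a 0%nat + l).
Proof.
  intros H e He. destruct (H e He) as [N HN]. exists (S N). intros n Hn.
  destruct n. lia. rewrite decomp_sum by lia. simpl pred. unfold Rdist.
  replace (a 0%nat + sum_f_R0 (fun i => a (S i)) n - (a 0%nat + l)) with (sum_f_R0 (fun i => a (S i)) n - l) by ring.
  apply HN. lia.
Qed.

Section Sound.
Variable f : Form -> R.
Hypothesis Hf : valuation f.
Let frange a : 0 <= f a <= 1. Proof. apply Hf. Qed.
Let fneg a : f (Neg a) = 1 - f a. Proof. apply Hf. Qed.
Let fimp a b : f (Imp a b) = Rmin 1 (1 - f a + f b). Proof. apply Hf. Qed.
Let fdel s : infinite_sum (fun n => f (s n) / 2 ^ (S n)) (f (Delta s)). Proof. apply Hf. Qed.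

Lemma fD s l : infinite_sum (fun n => f (s n) / 2 ^ (S n)) l -> f (Delta s) = l.
Proof. intros H. eapply uniqueness_sum; eauto. Qed.

Lemma f_imp1 a b : f a <= f b -> f (Imp a b) = 1.
Proof. intros. rewrite fimp. apply Rmin_left. pose proof (frange a); pose proof (frange b); lra. Qed.
Lemma f_imp_le a b : f (Imp a b) = 1 -> f a <= f b.
Proof. rewrite fimp. unfold Rmin. destruct Rle_dec; lra. Qed.

Lemma f_bot a : f (Neg (Imp a a)) = 0.
Proof. rewrite fneg, fimp. unfold Rmin; destruct Rle_dec; lra. Qed.

Lemma sum_first g n : (forall k, g (S k) = 0) -> sum_f_R0 g n = g 0%nat.
Proof. intros H; induction n; simpl; auto. rewrite IHn, H. ring. Qed.

Lemma f_half a : f (half a) = f a / 2.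
Proof.
  unfold half. apply fD. intros e He. exists 0%nat. intros n _. unfold Rdist.
  rewrite sum_first. simpl. replace (f a / (2 * 1) - f a / 2) with 0 by field. rewrite Rabs_R0; auto.
  intros k. simpl. unfold sconst. rewrite f_bot. lra.
Qed.

Lemma f_decomp s : f (Delta s) = f (s 0%nat) / 2 + f (Delta (stail s)) / 2.
Proof.
  apply fD. pose proof (is_scale _ _ (/2) (fdel (stail s))) as H.
  apply (is_shift (fun n => match n with 0%nat => f (s 0%nat) / 2 ^ 1 | S n => / 2 * (f (stail s n) / 2 ^ S n) end)) in H.
  replace (f (s 0%nat) / 2 + f (Delta (stail s)) / 2)
    with (f (s 0%nat) / 2 ^ 1 + / 2 * f (Delta (stail s))) by (simpl; field).
  eapply is_ext; [|exact H].
  intros [|n]. reflexivity. unfold stail. simpl. field. apply pow_nonzero; lra.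
Qed.

Lemma f_scale s : f (Delta (fun n => half (s n))) = f (Delta s) / 2.
Proof.
  apply fD. pose proof (is_scale _ _ (/2) (fdel s)) as H.
  replace (f (Delta s) / 2) with (/ 2 * f (Delta s)) by field.
  eapply is_ext; [|exact H]. intros n. simpl. rewrite f_half. field. apply pow_nonzero; lra.
Qed.

Lemma f_const a : f (Delta (sconst a)) = f a.
Proof.
  apply fD. pose proof (is_scale _ _ (f a) is_geom) as H.
  rewrite Rmult_1_r in H. eapply is_ext; [|exact H]. intros n. unfold sconst. field.
  apply pow_nonzero; lra.
Qed.

Lemma f_mono s t : (forall n, f (s n) <= f (t n)) -> f (Delta s) <= f (Delta t).
Proof.
  intros H. eapply is_le; [|apply (fdel s)|apply (fdel t)]. intros n. simpl. unfold Rdiv.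
  apply Rmult_le_compat_r; auto. left; apply Rinv_0_lt_compat. pose proof (pow_lt 2 n); lra.
Qed.

Lemma f_D7 s t : f (Delta (fun n => Imp (s n) (t n))) <= 1 - f (Delta s) + f (Delta t).
Proof.
  pose proof (is_lin _ _ _ _ (-1) 1 (fdel s) (fdel t)) as H.
  pose proof (is_lin _ _ _ _ 1 1 is_geom H) as H2.
  replace (1 - f (Delta s) + f (Delta t)) with (1 * 1 + 1 * (-1 * f (Delta s) + 1 * f (Delta t))) by ring.
  eapply is_le; [|apply fdel|exact H2]. intros n. simpl. rewrite fimp.
  pose proof (Rmin_r 1 (1 - f (s n) + f (t n))). pose proof (pow_lt 2 n ltac:(lra)).
  unfold Rdiv. apply Rle_trans with ((1 - f (s n) + f (t n)) * / (2 * 2 ^ n)).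
  apply Rmult_le_compat_r; auto. left; apply Rinv_0_lt_compat; lra. right; field; lra.
Qed.

Ltac mins := repeat rewrite ?fimp, ?fneg, ?f_half in *; unfold Rmin in *;
  repeat match goal with
  | |- context [Rle_dec ?a ?b] => destruct (Rle_dec a b)
  | H : context [Rle_dec ?a ?b] |- _ => destruct (Rle_dec a b)
  end; lra.

Lemma ax_valid x : IsAxiom x -> f x = 1.
Proof.
  intros H; destruct H; apply f_imp1.
  - pose proof (frange a); pose proof (frange b); mins.
  - pose proof (frange a); pose proof (frange b); pose proof (frange c0); mins.
  - pose proof (frange a); pose proof (frange b); mins.
  - pose proof (frange a); pose proof (frange b); mins.
  - rewrite ?fneg, ?fimp, ?f_half. rewrite (f_decomp s). pose proof (frange (s 0%nat)); pose proof (frange (Delta (stail s))). mins.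
  - rewrite ?fneg, ?fimp, ?f_half. rewrite (f_decomp s). pose proof (frange (s 0%nat)); pose proof (frange (Delta (stail s))). mins.
  - rewrite f_half, f_scale. lra.
  - rewrite f_half, f_scale. lra.
  - rewrite f_const. lra.
  - rewrite f_const. lra.
  - rewrite f_half. rewrite (f_decomp (scons _ s)). simpl. unfold stail; simpl.
    change (fun n => s n) with s. rewrite f_bot. lra.
  - rewrite f_half. rewrite (f_decomp (scons _ s)). simpl. unfold stail; simpl.
    change (fun n => s n) with s. rewrite f_bot. lra.
  - apply f_mono. intros n. pose proof (frange (s n)); pose proof (frange (t n)). mins.
  - pose proof (frange a); pose proof (frange b). mins.
  - pose proof (frange a); pose proof (frange b). mins.
  - pose proof (f_D7 s t). pose proof (frange (Delta s)); pose proof (frange (Delta t)).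
    pose proof (frange (Delta (fun n => Imp (s n) (t n)))). mins.
Qed.
End Sound.

#[global] Instance Der_DFilt Th : DFilt (Der Th).
Proof.
  assert (FD : Filt (Der Th)).
  { constructor. intros x H; apply der_ax; auto. intros x y H1 H2; exact (der_mp Th x y H1 H2). }
  exact (Build_DFilt _ FD (fun s H => der_del Th s H)).
Qed.

Lemma soundness Th phi : Provable Th phi -> Entails Th phi.
Proof.
  intros (I & lt & top & a & W & Tr & Tot & Cnt & Htop & Ha & J) f Hf HTh.
  assert (All : forall i, f (a i) = 1).
  { intros i. induction i as [i IH] using (well_founded_ind W).
    destruct (J i) as [H|[H|[(j & k & Hj & Hk & E)|(g & Hg & E)]]].
    - apply ax_valid; auto.
    - auto.
    - pose proof (IH j Hj) as A. pose proof (IH k Hk) as B. rewrite E in B.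
      apply (f_imp_le f Hf) in B. destruct Hf as [R _]. pose proof (R (a i)). lra.
    - rewrite E. apply (fD f Hf). eapply is_ext; [|exact is_geom]. intros n. simpl. rewrite (IH (g n) (Hg n)). reflexivity. }
  rewrite <- Ha. apply All.
Qed.

Lemma completeness Th phi : Entails Th phi -> Provable Th phi.
Proof.
  intros HE. apply NNPP. intros HP.
  set (T := Der Th).
  assert (nT : ~ T phi) by (intros H; apply HP, Der_Prov; auto).
  assert (Hn : exists n, ~ le T (Neg phi) (u n)).
  { apply NNPP. intros Hno. apply nT. apply arch. intros n. apply NNPP. intros Hc. apply Hno. eauto. }
  destruct Hn as [n Hn].
  destruct (prime_ext (T:=T) (Imp (Neg phi) (u n)) Hn) as (F & HF & E & Fb & lin).
  assert (nb : ~ F Bot). { intros HB. apply Fb. exact (@fmp F HF Bot _ HB (@bot_le F HF (Imp (Neg phi) (u n)))). }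
  assert (Hle : le F phi (Neg (u n))).
  { destruct (lin (Neg phi) (u n)) as [H|H]. contradiction.
    apply neg_anti in H. rewrite dn in H. exact H. }
  pose proof (v_less nb lin phi n Hle) as Hlt.
  pose proof (HE (v (F:=F)) (v_valuation nb lin)) as Hv.
  assert (phi1 : v (F:=F) phi = 1). { apply Hv. intros t Ht. apply (v_top nb lin). apply E. apply der_hyp. auto. }
  lra.
Qed.

Theorem mainTheorem13 :
  forall (Theta : Form -> Prop) (phi : Form), Provable Theta phi <-> Entails Theta phi.
Proof. intros; split; [apply soundness|apply completeness]. Qed.
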